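(* Let $(\Omega,\mathcal{A})$ be a measurable space with a $\sigma$-finite measure $\mu$, $\pi$ a probability density with respect to $\mu$, and $q_1,\dots,q_D$ transition densities (for each $x$, $q_d(x,\cdot)$ is a probability density with respect to $\mu$). Write $\bar\pi=\pi\otimes\pi$ and $(X,X')\sim\bar\pi$. Assume (A1): for every $d$, $\bar\pi\{(x,x'):q_d(x,x')=0\}=0$; (A2): for every $d$, $\mathbb{E}_{\bar\pi}[|\log q_d(X,X')|]<\infty$. Let $(\alpha^t)_{t\ge1}$ be defined by $\alpha^1=(1/D,\dots,1/D)$ and $\alpha^{t+1}=F(\alpha^t)$, where $F(\alpha)=\big(\mathbb{E}_{\bar\pi}[\alpha_dq_d(X,X')/\sum_{j=1}^D\alpha_jq_j(X,X')]\big)_{1\le d\le D}$. Then $\lim_{t\to\infty}\alpha^t=\alpha^{\max}$.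
   Context: $\mathcal{S}=\{\alpha\in\mathbb{R}^D:\alpha_d\ge0,\ \sum_d\alpha_d=1\}$; $\mathcal{E}_{\bar\pi}(\alpha)=\mathbb{E}_{\bar\pi}[\log\sum_{d=1}^D\alpha_dq_d(X,X')]$. Standing assumption of the paper's setting: $\mathcal{E}_{\bar\pi}$ is strictly concave on $\mathcal{S}$; $\alpha^{\max}$ denotes its unique global maximizer on $\mathcal{S}$ (equivalently, the weight vector minimizing the Kullback divergence between $\bar\pi$ and $\pi(dx)\sum_d\alpha_dQ_d(x,dx')$). *)

(* Defs.v *)
From HB Require Import structures.
From mathcomp Require Import all_boot all_order all_algebra.
From mathcomp Require Import all_classical all_reals all_analysis.
Set Implicit Arguments. Unset Strict Implicit. Unset Printing Implicit Defensive.
Import Order.TTheory GRing.Theory Num.Theory.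
Local Open Scope ring_scope.
Local Open Scope classical_set_scope.

Section defs.
Context (d : measure_display) (T : measurableType d) (R : realType).

Definition simplex (D : nat) (a : 'I_D -> R) : Prop :=
  (forall k, 0 <= a k) /\ \sum_(k < D) a k = 1.

Definition mixdens (D : nat) (q : 'I_D -> T -> T -> R) (a : 'I_D -> R) (x y : T) : R :=
  \sum_(k < D) a k * q k x y.

Definition pibar (mu : {sigma_finite_measure set T -> \bar R}) (pi : T -> R)
  (A : set (T * T)) : \bar R :=
  (\int[mu \x mu]_(z in A) (pi z.1 * pi z.2)%:E)%E.

Definition Epibar (mu : {sigma_finite_measure set T -> \bar R}) (pi : T -> R)
  (g : T * T -> \bar R) : \bar R :=
  (\int[mu \x mu]_z ((pi z.1 * pi z.2)%:E * g z))%E.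

(* calE_pibar(alpha) = E_pibar[ log sum_d alpha_d q_d(X,X') ] (finite under (A2)) *)
Definition calE (mu : {sigma_finite_measure set T -> \bar R}) (pi : T -> R)
  (D : nat) (q : 'I_D -> T -> T -> R) (a : 'I_D -> R) : R :=
  fine (Epibar mu pi (fun z => (ln (mixdens q a z.1 z.2))%:E)).

Definition Fmap (mu : {sigma_finite_measure set T -> \bar R}) (pi : T -> R)
  (D : nat) (q : 'I_D -> T -> T -> R) (a : 'I_D -> R) : 'I_D -> R :=
  fun k => fine (Epibar mu pi
    (fun z => (a k * q k z.1 z.2 / mixdens q a z.1 z.2)%:E)).

End defs.

(* Main.v *)
Require Import Defs.
From HB Require Import structures.
From mathcomp Require Import all_boot all_order all_algebra.
From mathcomp Require Import all_classical all_reals all_analysis.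
From mathcomp Require Import measurable_realfun.
From mathcomp Require Import ring lra.
Import Order.TTheory GRing.Theory Num.Theory numFieldNormedType.Exports.
Set Implicit Arguments. Unset Strict Implicit. Unset Printing Implicit Defensive.
Local Open Scope ring_scope.
Local Open Scope classical_set_scope.

Lemma measurable_invR (R : realType) : measurable_fun [set: R] (@GRing.inv R).
Proof.
rewrite -set_itvNyy (@itv_bndbnd_setU _ _ _ (BLeft (0:R)))//.
apply/measurable_funU => //; split.
- apply: subspace_continuous_measurable_fun => //.
  rewrite continuous_open_subspace; last exact: interval_open.
  move=> x; rewrite inE/= in_itv/= => x0; apply: inv_continuous.
  by rewrite lt_eqF.
- rewrite (@itv_bndbnd_setU _ _ _ (BRight (0:R)))//; last by rewrite bnd_simp.
  apply/measurable_funU => //; split.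
  + rewrite set_itv1; exact: measurable_fun_set1.
  + apply: subspace_continuous_measurable_fun => //.
    rewrite continuous_open_subspace; last exact: interval_open.
    move=> x; rewrite inE/= in_itv/= andbT => x0; apply: inv_continuous.
    by rewrite gt_eqF.
Qed.

Section integ.
Context (d : measure_display) (T : measurableType d) (R : realType)
  (mu : {sigma_finite_measure set T -> \bar R}) (pi : T -> R)
  (D : nat) (q : 'I_D -> T -> T -> R).
Context (mpi : measurable_fun setT pi) (pi0 : forall x, 0 <= pi x)
  (pi1 : (\int[mu]_x (pi x)%:E = 1)%E)
  (mq : forall k, measurable_fun setT (fun z : T * T => q k z.1 z.2))
  (q0 : forall k x y, 0 <= q k x y)
  (A1 : forall k, pibar mu pi [set z | q k z.1 z.2 = 0] = 0%E).

Definition PP (z : T * T) : R := pi z.1 * pi z.2.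
Definition GG : set (T * T) := [set z | forall k, 0 < q k z.1 z.2].
Definition II (g : T * T -> R) : \bar R := Epibar mu pi (fun z => (g z)%:E).
Definition Ir g := fine (II g).
Definition good (g : T * T -> R) := measurable_fun setT g /\
  (mu \x mu)%E.-integrable setT (fun z => (PP z * g z)%:E).

Lemma mPP : measurable_fun setT PP.
Proof.
apply: measurable_funM.
  exact: (measurableT_comp mpi measurable_fst).
exact: (measurableT_comp mpi measurable_snd).
Qed.

Lemma PP0 z : 0 <= PP z.
Proof. by rewrite /PP mulr_ge0. Qed.

Lemma IIE g : II g = (\int[mu \x mu]_z (PP z * g z)%:E)%E.
Proof. by apply: eq_integral => z _; rewrite EFinM. Qed.

Lemma intPP : (\int[mu \x mu]_z (PP z)%:E = 1)%E.
Proof.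
rewrite (fubini_tonelli1 (fun z => (PP z)%:E)); last 2 first.
- by apply/measurable_EFinP; exact: mPP.
- by move=> z; rewrite lee_fin PP0.
rewrite /fubini_F /=.
transitivity (\int[mu]_x ((pi x)%:E))%E; last exact: pi1.
apply: eq_integral => x _.
under eq_integral do rewrite /PP /= EFinM.
rewrite ge0_integralZl//.
- by rewrite pi1 mule1.
- by apply/measurable_EFinP.
- by move=> y _; rewrite lee_fin.
- by rewrite lee_fin.
Qed.

Local Notation m := (mu \x mu)%E.

Lemma mPg g : measurable_fun setT g ->
  measurable_fun setT (fun z => (PP z * g z)%:E).
Proof. by move=> mg; apply/measurable_EFinP; exact: measurable_funM mPP mg. Qed.

Lemma L0 : \forall z \ae m, GG z \/ PP z = 0.
Proof.
have h k : \forall z \ae m, q k z.1 z.2 = 0 -> PP z = 0.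
  have mA : measurable [set z : T * T | q k z.1 z.2 = 0].
    rewrite -[X in measurable X]setTI; exact: (mq k) _ (measurable_set1 0).
  have := A1 k; rewrite /pibar => h0.
  have : (\int[m]_(z in [set z : T * T | q k z.1 z.2 = 0%R]) `|(PP z)%:E|)%E = 0%E.
    rewrite -h0; apply: eq_integral => z _.
    by rewrite gee0_abs// lee_fin PP0.
  have hm : measurable_fun [set z : T * T | q k z.1 z.2 = 0%R] (fun z => (PP z)%:E).
    by apply/measurable_EFinP; apply: measurable_funS mPP.
  move/(ae_eq_integral_abs _ mA hm).
  apply: filterS => z hz qz.
  by have := hz qz => /= [[]].
have := filter_forall (ae_filter_ringOfSetsType m) h.
apply: filterS => z hz.
case: (pselect (GG z)) => [|nG]; [by left|right].
have [k hk] : exists k, ~ 0 < q k z.1 z.2.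
  by apply/existsNP => hG; apply: nG.
apply: (hz k); apply/eqP; rewrite eq_le q0 andbT.
by rewrite leNgt; apply/negP.
Qed.

Lemma Lext g h : measurable_fun setT g -> measurable_fun setT h ->
  (forall z, GG z -> g z = h z) -> II g = II h.
Proof.
move=> mg mh gh; rewrite !IIE; apply: ae_eq_integral => //.
- exact: mPg.
- exact: mPg.
apply: filterS L0 => z [Gz|P0] _; first by rewrite gh.
by rewrite P0 !mul0r.
Qed.

Lemma eqi (f g : T * T -> \bar R) : (forall z, f z = g z) ->
  m.-integrable setT f -> m.-integrable setT g.
Proof. by move=> e; apply: eq_integrable => // z _; exact: e. Qed.

Lemma good_m g : good g -> measurable_fun setT g.
Proof. by case. Qed.

Lemma good_fin g : good g -> II g \is a fin_num.
Proof. by case=> _ ig; rewrite IIE; exact: integrable_fin_num. Qed.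

Lemma good_add g h : good g -> good h -> good (fun z => g z + h z).
Proof.
move=> [mg ig] [mh ih]; split; first exact: measurable_funD.
apply: (eqi _ (integrableD _ ig ih)) => //.
by move=> z /=; rewrite mulrDr EFinD.
Qed.

Lemma II_add g h : good g -> good h -> II (fun z => g z + h z) = (II g + II h)%E.
Proof.
move=> [mg ig] [mh ih]; rewrite !IIE -integralD//.
by apply: eq_integral => z _; rewrite mulrDr EFinD.
Qed.

Lemma Ir_add g h : good g -> good h -> Ir (fun z => g z + h z) = Ir g + Ir h.
Proof.
move=> gg gh; rewrite /Ir II_add// fineD//; exact: good_fin.
Qed.

Lemma good_scale c g : good g -> good (fun z => c * g z).
Proof.
move=> [mg ig]; split; first exact: measurable_funM.
apply: (eqi _ (integrableZl measurableT c ig)).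
by move=> z /=; rewrite -EFinM mulrCA.
Qed.

Lemma Ir_scale c g : good g -> Ir (fun z => c * g z) = c * Ir g.
Proof.
move=> gg; have [mg ig] := gg; rewrite /Ir IIE.
rewrite (eq_integral (fun z => (c%:E * (PP z * g z)%:E)%E)); last first.
  by move=> z _; rewrite -EFinM mulrCA.
rewrite integralZl// fineM//; rewrite -IIE; exact: good_fin.
Qed.

Lemma good_PP : m.-integrable setT (fun z => (PP z)%:E).
Proof.
apply/integrableP; split; first by apply/measurable_EFinP; exact: mPP.
rewrite (eq_integral (fun z => (PP z)%:E)); first by rewrite intPP ltry.
by move=> z _; rewrite gee0_abs// lee_fin PP0.
Qed.

Lemma good_cst c : good (fun _ => c).
Proof.
split; first exact: measurable_cst.
apply: (eqi _ (integrableZl measurableT c good_PP)).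
by move=> z /=; rewrite -EFinM mulrC.
Qed.

Lemma Ir_cst c : Ir (fun _ => c) = c.
Proof.
rewrite /Ir IIE.
rewrite (eq_integral (fun z => (c%:E * (PP z)%:E)%E)); last first.
  by move=> z _; rewrite -EFinM mulrC.
by rewrite integralZl ?good_PP// intPP mule1.
Qed.

Lemma good_sub g h : good g -> good h -> good (fun z => g z - h z).
Proof.
move=> gg gh.
suff -> : (fun z => g z - h z) = (fun z => g z + -1 * h z).
  exact: good_add gg (good_scale (-1) gh).
by apply/funext => z; rewrite mulN1r.
Qed.

Lemma Ir_sub g h : good g -> good h -> Ir (fun z => g z - h z) = Ir g - Ir h.
Proof.
move=> gg gh; have := Ir_add gg (good_scale (-1) gh).
rewrite Ir_scale// mulN1r => <-; congr Ir.
by apply/funext => z; rewrite mulN1r.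
Qed.

Lemma good_sum_seq (I : Type) (s : seq I) (f : I -> T * T -> R) :
  (forall i, good (f i)) ->
  good (fun z => \sum_(i <- s) f i z) /\
  Ir (fun z => \sum_(i <- s) f i z) = \sum_(i <- s) Ir (f i).
Proof.
move=> gf; elim: s => [|a s [IHg IHi]].
  have -> : (fun z => \sum_(i <- [::]) f i z) = (fun _ => 0).
    by apply/funext => z; rewrite big_nil.
  by rewrite big_nil Ir_cst; split => //; exact: good_cst.
have -> : (fun z => \sum_(i <- a :: s) f i z) =
    (fun z => f a z + \sum_(i <- s) f i z).
  by apply/funext => z; rewrite big_cons.
rewrite big_cons; split; first exact: good_add.
by rewrite Ir_add// IHi.
Qed.

Lemma good_sum (f : 'I_D -> T * T -> R) : (forall i, good (f i)) ->
  good (fun z => \sum_(i < D) f i z).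
Proof. by move=> gf; case: (good_sum_seq (index_enum 'I_D) gf). Qed.

Lemma Ir_sum (f : 'I_D -> T * T -> R) : (forall i, good (f i)) ->
  Ir (fun z => \sum_(i < D) f i z) = \sum_(i < D) Ir (f i).
Proof. by move=> gf; case: (good_sum_seq (index_enum 'I_D) gf). Qed.

Lemma Ir_ext g h : measurable_fun setT g -> measurable_fun setT h ->
  (forall z, GG z -> g z = h z) -> Ir g = Ir h.
Proof. by move=> mg mh gh; rewrite /Ir (Lext mg mh gh). Qed.

Lemma Ir_ge0 (g : T * T -> R) : measurable_fun setT g -> (forall z, GG z -> 0 <= g z) ->
  0 <= Ir g.
Proof.
move=> mg g0.
rewrite (@Ir_ext g (fun z => `|g z|))//; last 2 first.
- exact: measurableT_comp.
- by move=> z Gz; rewrite ger0_norm// g0.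
apply: fine_ge0; rewrite IIE; apply: integral_ge0 => z _.
by rewrite lee_fin mulr_ge0// PP0.
Qed.

Lemma Ir_le g h : good g -> good h -> (forall z, GG z -> g z <= h z) ->
  Ir g <= Ir h.
Proof.
move=> gg gh gh'; rewrite -subr_ge0 -Ir_sub//.
apply: Ir_ge0; first by apply: good_m; exact: good_sub.
by move=> z Gz; rewrite subr_ge0 gh'.
Qed.

Lemma good_dom (g h : T * T -> R) : measurable_fun setT g -> good h ->
  (forall z, GG z -> `|g z| <= h z) -> good g.
Proof.
move=> mg [mh ih] gh; split => //; apply/integrableP; split; first exact: mPg.
apply: le_lt_trans (integrableP _ _ _ ih).2.
apply: ae_ge0_le_integral => //; try (by move=> z _; exact: abse_ge0);
  try (by apply: measurableT_comp => //; exact: mPg).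
apply: filterS L0 => z [Gz|P0] _; last by rewrite P0 !mul0r abse0.
rewrite !abse_EFin lee_fin (normrM (PP z) (g z)) (normrM (PP z) (h z)).
rewrite (ger0_norm (PP0 z)); apply: ler_wpM2l; first exact: PP0.
exact: le_trans (gh _ Gz) (ler_norm _).
Qed.

End integ.

Section alg.
Context (R : realType) (D : nat).

Lemma le_sum1 (f : 'I_D -> R) j : (forall k, 0 <= f k) -> f j <= \sum_(k < D) f k.
Proof. by move=> f0; rewrite (bigD1 j)//= lerDl sumr_ge0. Qed.

Lemma convex_min (a x : 'I_D -> R) : simplex a ->
  exists j, x j <= \sum_(k < D) a k * x k.
Proof.
move=> [a0 a1]; set S := \sum_(k < D) a k * x k.
have [//|H] := pselect (exists j, x j <= S).
have H' j : S < x j.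
  by rewrite ltNge; apply/negP => hj; apply: H; exists j.
have hs : \sum_(k < D) a k * (x k - S) = 0.
  under eq_bigr do rewrite mulrBr.
  by rewrite sumrB -mulr_suml a1 mul1r subrr.
have h0 k : a k * (x k - S) = 0.
  by apply: (psumr_eq0P _ hs) => // i _; rewrite mulr_ge0// subr_ge0 ltW.
have : \sum_(k < D) a k = 0.
  apply: big1 => k _; move/eqP: (h0 k); rewrite mulf_eq0 => /orP[/eqP//|].
  by rewrite subr_eq0 => /eqP hk; have := H' k; rewrite hk ltxx.
by rewrite a1 => /eqP; rewrite oner_eq0.
Qed.

Lemma convex_max (a x : 'I_D -> R) : simplex a ->
  exists j, \sum_(k < D) a k * x k <= x j.
Proof.
move=> sa; have [j hj] := convex_min (fun k => - x k) sa.
exists j; rewrite -lerN2; apply: le_trans hj _.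
by rewrite -sumrN; apply: ler_sum => k _; rewrite mulrN.
Qed.

Lemma simplex_pos (a : 'I_D -> R) : simplex a -> exists j, 0 < a j.
Proof.
move=> [a0 a1]; have [//|H] := pselect (exists j, 0 < a j).
have : \sum_(k < D) a k = 0.
  apply: big1 => k _; apply/eqP; rewrite eq_le a0 andbT leNgt; apply/negP.
  by move=> hk; apply: H; exists k.
by rewrite a1 => /eqP; rewrite oner_eq0.
Qed.

End alg.


Section lnh.
Context (R : realType).
Lemma lnMp (x y : R) : 0 < x -> 0 < y -> ln (x * y) = ln x + ln y.
Proof. by move=> hx hy; rewrite lnM ?posrE. Qed.
Lemma lnVp (x : R) : 0 < x -> ln x^-1 = - ln x.
Proof. by move=> hx; rewrite lnV ?posrE. Qed.
Lemma lnDp (x y : R) : 0 < x -> 0 < y -> ln (x / y) = ln x - ln y.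
Proof. by move=> hx hy; rewrite lnMp ?invr_gt0// lnVp. Qed.
Lemma ln_le_sub1 (y : R) : 0 < y -> ln y <= y - 1.
Proof.
move=> hy; have h : ln (1 + (y - 1)) <= y - 1 by apply: le_ln1Dx; lra.
by move: h; have -> : 1 + (y - 1) = y by ring.
Qed.
End lnh.


Section cvgh.
Context (R : realType).
Lemma cvg_sumI (I : Type) (s : seq I) (u : I -> nat -> R) (l : I -> R) :
  (forall i, u i n @[n --> \oo] --> l i) ->
  (\sum_(i <- s) u i n) @[n --> \oo] --> \sum_(i <- s) l i.
Proof.
move=> h; elim: s => [|a s IH].
  under eq_cvg do rewrite big_nil.
  by rewrite big_nil; exact: cvg_cst.
under eq_cvg do rewrite big_cons.
by rewrite big_cons; apply: cvgD.
Qed.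
End cvgh.

Section model.
Context (d : measure_display) (T : measurableType d) (R : realType)
  (mu : {sigma_finite_measure set T -> \bar R}) (pi : T -> R)
  (D : nat) (q : 'I_D -> T -> T -> R).
Context (mpi : measurable_fun setT pi) (pi0 : forall x, 0 <= pi x)
  (pi1 : (\int[mu]_x (pi x)%:E = 1)%E)
  (mq : forall k, measurable_fun setT (fun z : T * T => q k z.1 z.2))
  (q0 : forall k x y, 0 <= q k x y)
  (A1 : forall k, pibar mu pi [set z | q k z.1 z.2 = 0] = 0%E)
  (A2 : forall k, (Epibar mu pi (fun z => (`|ln (q k z.1 z.2)|)%:E) < +oo)%E).

Local Notation m := (mu \x mu)%E.
Local Notation good := (good mu pi).
Local Notation Ir := (Ir mu pi).
Local Notation GG := (GG q).
Local Notation Ir_le' := (Ir_le mpi pi0 mq q0 A1).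
Local Notation Ir_ext' := (Ir_ext mpi pi0 mq q0 A1).
Local Notation good_dom' := (good_dom mpi pi0 mq q0 A1).
Local Notation Ir_ge0' := (Ir_ge0 mpi pi0 mq q0 A1).
Local Notation good_sum' := (good_sum mpi pi0 pi1).
Local Notation Ir_sum' := (Ir_sum mpi pi0 pi1).
Local Notation Ir_cst' := (Ir_cst mpi pi0 pi1).
Local Notation good_cst' := (good_cst mpi pi0 pi1).
Local Notation mPg' := (mPg mpi).

Definition mix (a : 'I_D -> R) (z : T * T) := mixdens q a z.1 z.2.
Definition lnm a z := ln (mix a z).
Definition rr a k z := a k * q k z.1 z.2 / mix a z.
Definition lnq k (z : T * T) := ln (q k z.1 z.2).
Definition BB z := \sum_(k < D) `|lnq k z|.

Lemma mmix a : measurable_fun setT (mix a).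
Proof.
rewrite /mix /mixdens.
apply: measurable_sum => k; apply: measurable_funM => //; exact: measurable_cst.
Qed.

Lemma mlnm a : measurable_fun setT (lnm a).
Proof. exact: measurableT_comp (mmix a). Qed.

Lemma mrr a k : measurable_fun setT (rr a k).
Proof.
apply: measurable_funM; first by apply: measurable_funM => //; exact: measurable_cst.
exact: measurableT_comp (@measurable_invR R) (mmix a).
Qed.

Lemma mlnq k : measurable_fun setT (lnq k).
Proof. exact: measurableT_comp. Qed.

Lemma good_abs g : good g -> good (fun z => `|g z|).
Proof.
move=> [mg ig]; split; first exact: measurableT_comp.
apply: (eqi _ (integrable_abse ig)) => z /=.
by rewrite normrM (ger0_norm (PP0 pi0 z)).
Qed.

Lemma good_lnq k : good (lnq k).
Proof.
split; first exact: mlnq.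
apply/integrableP; split; first exact: mPg' (mlnq k).
apply: le_lt_trans (A2 k); rewrite le_eqVlt; apply/orP; left; apply/eqP.
apply: eq_integral => z _.
by rewrite abse_EFin normrM (ger0_norm (PP0 pi0 z)) EFinM.
Qed.

Lemma good_BB : good BB.
Proof. apply: good_sum' => k; exact/good_abs/good_lnq. Qed.

Lemma mix_ge0 a z : (forall k, 0 <= a k) -> 0 <= mix a z.
Proof. by move=> a0; apply: sumr_ge0 => k _; rewrite mulr_ge0. Qed.

Lemma mix_gt0 a z : simplex a -> GG z -> 0 < mix a z.
Proof.
move=> sa Gz; have [j aj] := simplex_pos sa.
apply: lt_le_trans (le_sum1 j _).
  by rewrite mulr_gt0.
by move=> k; rewrite mulr_ge0//; case: sa.
Qed.

Lemma lnm_bound a z : simplex a -> GG z -> `|lnm a z| <= BB z.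
Proof.
move=> sa Gz.
have hB k : `|lnq k z| <= BB z by apply: le_sum1 => i.
have [j hj] := convex_min (fun k => q k z.1 z.2) sa.
have [j' hj'] := convex_max (fun k => q k z.1 z.2) sa.
have mp := mix_gt0 sa Gz.
rewrite ler_norml; apply/andP; split.
- apply: le_trans (_ : lnq j z <= _).
    by rewrite lerNl; apply: le_trans (hB j); rewrite -normrN ler_norm.
  by rewrite /lnq /lnm ler_ln// posrE.
- apply: le_trans (_ : lnq j' z <= _); last first.
    by apply: le_trans (hB j'); exact: ler_norm.
  by rewrite /lnq /lnm ler_ln// posrE.
Qed.

Lemma good_lnm a : simplex a -> good (lnm a).
Proof.
move=> sa; apply: good_dom' (mlnm a) good_BB _ => //.
by move=> z Gz; exact: lnm_bound.
Qed.

Lemma rr_bound a k z : (forall i, 0 <= a i) -> 0 <= rr a k z <= 1.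
Proof.
move=> a0; rewrite /rr.
have hm := mix_ge0 z a0.
have hk : a k * q k z.1 z.2 <= mix a z.
  by apply: (le_sum1 (f := fun i => a i * q i z.1 z.2) k) => i; rewrite mulr_ge0.
have [m0|mp] := eqVneq (mix a z) 0.
  by rewrite m0 invr0 mulr0 lexx ler01.
have mpos : 0 < mix a z by rewrite lt_def mp.
rewrite divr_ge0 ?mulr_ge0//= ler_pdivrMr// mul1r. exact: hk.
Qed.

Lemma good_rr a k : (forall i, 0 <= a i) -> good (rr a k).
Proof.
move=> a0; apply: good_dom' (mrr a k) (good_cst' 1) _ => //.
by move=> z _; have /andP[h0 h1] := rr_bound k z a0; rewrite ger0_norm.
Qed.

Lemma sum_rr a z : simplex a -> GG z -> \sum_(k < D) rr a k z = 1.
Proof.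
move=> sa Gz; rewrite /rr -mulr_suml divff//.
by rewrite gt_eqF// (mix_gt0 sa Gz).
Qed.

Lemma FmapE a k : Fmap mu pi q a k = Ir (rr a k).
Proof. by []. Qed.

Lemma calEE a : calE mu pi q a = Ir (lnm a).
Proof. by []. Qed.

Lemma Ir_pos g h : good g -> good h ->
  (forall z, GG z -> 0 < g z /\ h z = ln (g z)) -> 0 < Ir g.
Proof.
move=> gg gh H; set c := expR (Ir h).
have c0 : 0 < c := expR_gt0 _.
have key : Ir (fun z => h z - Ir h) <= Ir (fun z => c^-1 * g z - 1).
  apply: Ir_le'.
  - exact: good_sub gh (good_cst' _).
  - exact: good_sub (good_scale _ gg) (good_cst' _).
  move=> z Gz; have [gp ->] := H z Gz.
  have := ln_le_sub1 (divr_gt0 gp c0).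
  by rewrite lnDp// /c expRK mulrC.
move: key; rewrite Ir_sub ?Ir_cst' ?subrr//; last exact: good_cst'.
rewrite Ir_sub ?Ir_cst' ?Ir_scale//; [|exact: good_scale|exact: good_cst'].
rewrite subr_ge0 => h1.
have ci : 0 < c^-1 by rewrite invr_gt0.
have : c <= Ir g by rewrite -(ler_pM2l ci) mulVf ?gt_eqF.
exact: lt_le_trans.
Qed.

Lemma F_ge0 a k : (forall i, 0 <= a i) -> 0 <= Fmap mu pi q a k.
Proof.
move=> a0; rewrite FmapE; apply: Ir_ge0'; first exact: mrr.
by move=> z _; have /andP[] := rr_bound k z a0.
Qed.

Lemma F_sum a : simplex a -> \sum_(k < D) Fmap mu pi q a k = 1.
Proof.
move=> sa; have a0 : forall i, 0 <= a i by case: sa.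
under eq_bigr do rewrite FmapE.
rewrite -Ir_sum'; last by move=> i; exact: good_rr.
rewrite (@Ir_ext' _ (fun _ => 1)) ?Ir_cst'//.
- by apply: measurable_sum => i; exact: mrr.
- by move=> z Gz; exact: sum_rr.
Qed.

Lemma F_gt0 a k : simplex a -> 0 < a k -> 0 < Fmap mu pi q a k.
Proof.
move=> sa ak; have a0 : forall i, 0 <= a i by case: sa.
rewrite FmapE; apply: (@Ir_pos _ (fun z => ln (a k) + lnq k z - lnm a z)).
- exact: good_rr.
- apply: good_sub (good_lnm sa); apply: good_add (good_lnq k).
  exact: good_cst'.
move=> z Gz; have mp := mix_gt0 sa Gz; have qp := Gz k.
split; first by rewrite /rr divr_gt0// mulr_gt0.
by rewrite /rr lnDp ?mulr_gt0// lnMp.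
Qed.

Lemma F_eq0 a k : a k = 0 -> Fmap mu pi q a k = 0.
Proof.
move=> ak; rewrite FmapE.
have -> : rr a k = fun _ => 0 by apply/funext => z; rewrite /rr ak !mul0r.
exact: Ir_cst'.
Qed.

Lemma F_simplex a : simplex a -> simplex (Fmap mu pi q a).
Proof.
move=> sa; split; last exact: F_sum.
by move=> k; apply: F_ge0; case: sa.
Qed.

Lemma pointK a b z k : simplex a -> (forall i, 0 < a i) -> simplex b -> GG z ->
  rr b k z * (lnm b z - lnm a z) <=
  (if 0 < b k then ln (b k) + ln (Fmap mu pi q a k) - ln (a k)
                   - ln (Fmap mu pi q b k) else 0) * rr b k z
  + (Fmap mu pi q b k / Fmap mu pi q a k) * rr a k z - rr b k z.
Proof.
move=> sa apos sb Gz.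
have b0 : forall i, 0 <= b i by case: sb.
have a0 : forall i, 0 <= a i by case: sa.
set c := Fmap mu pi q b k; set a' := Fmap mu pi q a k.
have a'p : 0 < a' by exact: F_gt0 sa (apos k).
case: ifPn => bk; last first.
  have bk0 : b k = 0.
    by apply/eqP; rewrite eq_le b0 andbT leNgt.
  have -> : rr b k z = 0 by rewrite /rr bk0 !mul0r.
  have -> : c = 0 by rewrite /c F_eq0.
  lra.
have cp : 0 < c by exact: F_gt0 sb bk.
have mb := mix_gt0 sb Gz; have ma := mix_gt0 sa Gz.
have qk := Gz k; have ak := apos k.
have p1 : 0 < mix b z / mix a z := divr_gt0 mb ma.
have p2 : 0 < a k / b k := divr_gt0 ak bk.
have p3 : 0 < c / a' := divr_gt0 cp a'p.
have p12 := mulr_gt0 p1 p2.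
have hx := mulr_gt0 p12 p3.
have lnx : ln ((mix b z / mix a z) * (a k / b k) * (c / a')) = (lnm b z - lnm a z)
    - (ln (b k) + ln a' - ln (a k) - ln c).
  rewrite (lnMp p12 p3) (lnMp p1 p2) !lnDp// /lnm; ring.
move: hx lnx; set x := (mix b z / mix a z) * (a k / b k) * (c / a') => hx lnx.
have s0 : 0 <= rr b k z by have /andP[] := rr_bound k z b0.
have hsx : rr b k z * x = (c / a') * rr a k z.
  rewrite /rr /x; field.
  by rewrite !gt_eqF.
have := ler_wpM2l s0 (ln_le_sub1 hx); rewrite lnx => h.
lra.
Qed.

Lemma keyK a b : simplex a -> (forall k, 0 < a k) -> simplex b ->
  Ir (lnm b) - Ir (lnm a) <=
  \sum_(k < D) Fmap mu pi q b k * (ln (Fmap mu pi q a k) - ln (a k)).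
Proof.
move=> sa apos sb.
have b0 : forall i, 0 <= b i by case: sb.
have a0 : forall i, 0 <= a i by case: sa.
pose c := Fmap mu pi q b; pose a' := Fmap mu pi q a.
have a'p k : 0 < a' k by exact: F_gt0 sa (apos k).
pose K k := if 0 < b k then ln (b k) + ln (a' k) - ln (a k) - ln (c k) else 0.
pose f2 := fun z => \sum_(k < D)
  (K k * rr b k z + (c k / a' k) * rr a k z - rr b k z).
have gk k : good (fun z => K k * rr b k z + (c k / a' k) * rr a k z - rr b k z).
  apply: good_sub (good_rr _ b0).
  by apply: good_add; apply: good_scale; exact: good_rr.
have step1 : Ir (fun z => lnm b z - lnm a z) <= Ir f2.
  apply: Ir_le'; first exact: good_sub (good_lnm sb) (good_lnm sa).
    exact: good_sum'.
  move=> z Gz; rewrite -[X in X <= _]mul1r -(sum_rr sb Gz) mulr_suml.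
  by apply: ler_sum => k _; exact: pointK.
have step2 : Ir f2 = \sum_(k < D) K k * c k.
  rewrite /f2 Ir_sum'//; apply: eq_bigr => k _.
  rewrite Ir_sub; [|by apply: good_add; apply: good_scale; exact: good_rr
                  |exact: good_rr].
  rewrite Ir_add; [|by apply: good_scale; exact: good_rr
                  |by apply: good_scale; exact: good_rr].
  rewrite !Ir_scale; [|exact: good_rr|exact: good_rr].
  rewrite -!FmapE -/(c k) -/(a' k) divfK ?gt_eqF//.
  by rewrite addrK.
have step3 : \sum_(k < D) K k * c k <=
    \sum_(k < D) (c k * (ln (a' k) - ln (a k)) + (b k - c k)).
  apply: ler_sum => k _; rewrite /K; case: ifPn => bk; last first.
    have bk0 : b k = 0 by apply/eqP; rewrite eq_le b0 andbT leNgt.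
    have ck0 : c k = 0 by rewrite /c F_eq0.
    rewrite bk0 ck0; lra.
  have cp : 0 < c k by exact: F_gt0 sb bk.
  have h := ln_le_sub1 (divr_gt0 bk cp).
  rewrite lnDp// in h.
  have := ler_wpM2l (ltW cp) h.
  have -> : c k * (b k / c k - 1) = b k - c k by field; rewrite gt_eqF.
  move=> h'; lra.
move: step1; rewrite Ir_sub ?step2; [|exact: good_lnm|exact: good_lnm].
move=> h1; apply: le_trans h1 _; apply: le_trans step3 _.
rewrite big_split /= sumrB.
have -> : \sum_(k < D) b k = 1 by case: sb.
by rewrite F_sum// subrr addr0.
Qed.

Lemma cont_calE (be : nat -> 'I_D -> R) (bb : 'I_D -> R) :
  (forall n, simplex (be n)) -> simplex bb ->
  (forall k, be n k @[n --> \oo] --> bb k) ->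
  Ir (lnm (be n)) @[n --> \oo] --> Ir (lnm bb).
Proof.
move=> sb sbb cb.
pose f_ := fun n z => (PP pi z * lnm (be n) z)%:E.
pose f := fun z => (PP pi z * lnm bb z)%:E.
pose g := fun z => (PP pi z * BB z)%:E.
have mf_ n : measurable_fun setT (f_ n) by exact: mPg' (mlnm _).
have mf : measurable_fun setT f by exact: mPg' (mlnm _).
have ig : m.-integrable setT g by case: good_BB.
have f_f : \forall z \ae m, setT z -> f_ ^~ z @ \oo --> f z.
  apply: filterS (L0 mpi pi0 mq q0 A1) => z [Gz|P0] _; last first.
    have -> : f_ ^~ z = cst (f z).
      by apply/funext => n; rewrite /f_ /f P0 !mul0r.
    exact: cvg_cst.
  apply: cvg_EFin; first by apply: nearW.
  apply: cvgMl_tmp.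
  have hm : mix (be n) z @[n --> \oo] --> mix bb z.
    apply: cvg_sumI => k; apply: cvgMr_tmp; exact: cb.
  exact: (continuous_cvg _ (continuous_ln (mix_gt0 sbb Gz)) hm).
have f_g : \forall z \ae m, forall n, setT z -> (`|f_ n z| <= g z)%E.
  apply: filterS (L0 mpi pi0 mq q0 A1) => z [Gz|P0] n _; last first.
    by rewrite /f_ /g P0 !mul0r abse0.
  rewrite /f_ /g abse_EFin lee_fin normrM (ger0_norm (PP0 pi0 z)).
  by apply: ler_wpM2l; [exact: PP0|exact: lnm_bound].
have [_ _ hc] := dominated_convergence measurableT mf_ mf f_f ig f_g.
have : II mu pi (lnm (be n)) @[n --> \oo] --> (Ir (lnm bb))%:E.
  rewrite /Ir fineK; last exact: good_fin (good_lnm sbb).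
  rewrite IIE; under eq_cvg do rewrite IIE.
  exact: hc.
by move/fine_cvg.
Qed.

End model.

Section pure.
Context (R : realType) (D : nat).

Lemma subseq_cvg (w : nat -> R) (l : R) (f : nat -> nat) : (forall n, (n <= f n)%N) ->
  w n @[n --> \oo] --> l -> w (f n) @[n --> \oo] --> l.
Proof.
move=> hf /cvgrPdist_lt h; apply/cvgrPdist_lt => e e0.
have [N _ HN] := h e e0; exists N => // n /= Nn; apply: HN.
exact: leq_trans Nn (hf n).
Qed.

Lemma incr_ge (f : nat -> nat) : increasing_seq f -> forall n, (n <= f n)%N.
Proof.
move=> hf; elim => [//|n IH].
have : (f n < f n.+1)%N.
  have H : (f n.+1 <= f n)%N = false by rewrite -(ltnn n); exact: hf.
  by rewrite ltnNge H.
by apply: leq_ltn_trans.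
Qed.

Lemma bw_multi (u : nat -> 'I_D -> R) : (forall n k, 0 <= u n k <= 1) ->
  exists psi : nat -> nat, (forall n, (n <= psi n)%N) /\
    forall k, cvgn (fun n => u (psi n) k).
Proof.
move=> ub.
suff H j : (j <= D)%N -> exists psi : nat -> nat, (forall n, (n <= psi n)%N) /\
    forall k : 'I_D, (k < j)%N -> cvgn (fun n => u (psi n) k).
  have [psi [h1 h2]] := H D (leqnn D); exists psi; split => // k.
  exact: h2 (ltn_ord k).
elim: j => [_|j IH jD].
  by exists id; split => // k; rewrite ltn0.
have [psi [hpsi hcv]] := IH (ltnW jD).
pose k0 : 'I_D := Ordinal jD.
have bnd : bounded_fun (fun n => u (psi n) k0).
  exists 1; split => // M M1 n _ /=.
  have /andP[h0 h1] := ub (psi n) k0.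
  by rewrite ger0_norm// (le_trans h1)// ltW.
have [f fincr fcv] := bolzano_weierstrass bnd.
have fge := incr_ge fincr.
exists (psi \o f); split.
  by move=> n /=; apply: leq_trans (fge n) (hpsi (f n)).
move=> k; rewrite ltnS leq_eqVlt => /orP[/eqP kj|kj].
  have -> : k = k0 by apply: val_inj.
  exact: fcv.
apply/cvg_ex; exists (limn (fun n => u (psi n) k)).
exact: (subseq_cvg fge (hcv k kj)).
Qed.

Lemma final_pure (L : ('I_D -> R) -> R) (al : nat -> 'I_D -> R) (amax : 'I_D -> R) :
  (forall t, simplex (al t.+1)) -> simplex amax ->
  (forall a, simplex a -> L a <= L amax) ->
  (forall a b : 'I_D -> R, simplex a -> simplex b -> a <> b ->
     forall t : R, 0 < t < 1 ->
       t * L a + (1 - t) * L b < L (fun k => t * a k + (1 - t) * b k)) ->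
  (forall (be : nat -> 'I_D -> R) bb, (forall n, simplex (be n)) -> simplex bb ->
     (forall k, be n k @[n --> \oo] --> bb k) -> L (be n) @[n --> \oo] --> L bb) ->
  L (al t) @[t --> \oo] --> L amax ->
  forall k, al t k @[t --> \oo] --> amax k.
Proof.
move=> sal sam hmax hconc hcont hL k.
apply: contrapT => hnot.
have [e [e0 he]] : exists e, 0 < e /\
    forall N, exists t, (N <= t)%N /\ e <= `|amax k - al t k|.
  apply: contrapT => H2; apply: hnot; apply/cvgrPdist_lt => e e0.
  have [N HN] : exists N, forall t, (N <= t)%N -> `|amax k - al t k| < e.
    apply: contrapT => H3; apply: H2; exists e; split => // N.
    apply: contrapT => H4; apply: H3; exists N => t Nt.
    rewrite ltNge; apply/negP => H5; apply: H4; by exists t; split.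
  by exists N => // t /= Nt; exact: HN.
have he' N : exists t, (N.+1 <= t)%N /\ e <= `|amax k - al t k| := he N.+1.
have [g hg] := choice he'.
pose u n := al (g n).
have su n : simplex (u n).
  have := sal (g n).-1; rewrite prednK //.
  by have := (hg n).1; exact: leq_trans.
have ub n j : 0 <= u n j <= 1.
  have [s0 s1] := su n; rewrite s0 /= -s1.
  by apply: (@le_sum1 R D (u n) j) => i.
have [psi [hpsi hcv]] := bw_multi ub.
pose bb j := limn (fun n => u (psi n) j).
have cb j : u (psi n) j @[n --> \oo] --> bb j := hcv j.
have sbb : simplex bb.
  split.
    move=> j; apply: limr_ge; first exact: hcv.
    by apply: nearW => n; have /andP[] := ub (psi n) j.
  have h := cvg_sumI (s := index_enum 'I_D) cb.
  have e1 : (fun n => \sum_(i <- index_enum 'I_D) u (psi n) i) = cst 1.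
    by apply/funext => n; have [_ ->] := su (psi n).
  rewrite e1 in h.
  apply: (cvg_unique (@Rhausdorff R) h); exact: cvg_cst.
have L1 : L (u (psi n)) @[n --> \oo] --> L bb.
  by apply: hcont => // n; exact: su.
have L2 : L (u (psi n)) @[n --> \oo] --> L amax.
  apply: (subseq_cvg (f := fun n => g (psi n))) hL => n.
  apply: leq_trans (hpsi n) _; apply: leq_trans (leqnSn _) _.
  exact: (hg (psi n)).1.
have Le : L bb = L amax := cvg_unique (@Rhausdorff R) L1 L2.
have neq : bb <> amax.
  move=> Eb; have := cb k; rewrite Eb => /cvgrPdist_lt/(_ e e0) [N _ HN].
  have := HN N (leqnn N); rewrite ltNge => /negP; apply.
  exact: (hg (psi N)).2.
have h2 : 0 < (2^-1 : R) < 1.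
  by rewrite invr_gt0 ltr0n andTb invf_lt1 ?ltr0n ?ltr1n.
have := hconc _ _ sbb sam neq _ h2.
set mid := fun k => _.
have smid : simplex mid.
  split.
    move=> j; rewrite /mid addr_ge0// mulr_ge0//; try lra.
    - by case: sbb.
    - by case: sam.
  rewrite /mid big_split /= -!mulr_sumr.
  have [_ ->] := sbb; have [_ ->] := sam; lra.
have := hmax _ smid; rewrite Le; lra.
Qed.

End pure.

Theorem proposition4p3 (d : measure_display) (T : measurableType d) (R : realType)
  (mu : {sigma_finite_measure set T -> \bar R}) (pi : T -> R)
  (D : nat) (q : 'I_D -> T -> T -> R)
  (alpha : nat -> 'I_D -> R) (amax : 'I_D -> R) :
  (* pi is a probability density wrt mu *)
  measurable_fun setT pi -> (forall x, 0 <= pi x) ->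
  (\int[mu]_x (pi x)%:E = 1)%E ->
  (* q_1..q_D are transition densities wrt mu *)
  (forall k, measurable_fun setT (fun z : T * T => q k z.1 z.2)) ->
  (forall k x y, 0 <= q k x y) ->
  (forall k x, (\int[mu]_y (q k x y)%:E = 1)%E) ->
  (* (A1) *)
  (forall k, pibar mu pi [set z | q k z.1 z.2 = 0] = 0%E) ->
  (* (A2) *)
  (forall k, (Epibar mu pi (fun z => (`|ln (q k z.1 z.2)|)%:E) < +oo)%E) ->
  (* standing assumption: calE is strictly concave on S *)
  (forall a b : 'I_D -> R, simplex a -> simplex b -> a <> b ->
     forall t : R, 0 < t < 1 ->
       t * calE mu pi q a + (1 - t) * calE mu pi q b
         < calE mu pi q (fun k => t * a k + (1 - t) * b k)) ->
  (* amax is the global maximizer of calE on S *)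
  simplex amax -> (forall a, simplex a -> calE mu pi q a <= calE mu pi q amax) ->
  (* the iteration *)
  alpha 1%N = (fun _ => (D%:R)^-1) ->
  (forall t, (1 <= t)%N -> alpha t.+1 = Fmap mu pi q (alpha t)) ->
  forall k, alpha t k @[t --> \oo] --> amax k.
Proof.
move=> mpi pi0 pi1 mq q0 _ A1 A2 hconc sam hmax h1 hrec k.
have D0 : (0 < D)%N by apply: leq_ltn_trans (leq0n k) (ltn_ord k).
have Dp : 0 < (D%:R : R) by rewrite ltr0n.
have inv t : simplex (alpha t.+1) /\ forall j, 0 < alpha t.+1 j.
  elim: t => [|t [st pt]].
    rewrite h1; split; last by move=> j; rewrite invr_gt0.
    split; first by move=> j; rewrite invr_ge0 ltW.
    by rewrite sumr_const card_ord -[LHS]mulr_natr mulVf// gt_eqF.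
  rewrite hrec //; split; first exact: F_simplex.
  by move=> j; apply: F_gt0 (pt j).
pose c := Fmap mu pi q amax.
have c0 j : 0 <= c j by apply: F_ge0; case: sam.
have c1 : \sum_(j < D) c j = 1 by exact: F_sum.
pose Phi (b : 'I_D -> R) := \sum_(j < D) c j * ln (b j).
pose ell n := calE mu pi q amax - calE mu pi q (alpha n.+1).
have ell0 n : 0 <= ell n by rewrite subr_ge0; apply: hmax; case: (inv n).
have ellP n : ell n <= Phi (alpha n.+2) - Phi (alpha n.+1).
  have [st pt] := inv n.
  have := keyK mpi pi0 pi1 mq q0 A1 A2 st pt sam.
  rewrite -hrec // -calEE -calEE => h; apply: le_trans h _.
  by rewrite /Phi -sumrB; apply: ler_sum => j _; rewrite mulrBr.
have PhiP n : Phi (alpha n.+1) <= 0.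
  have [[s0 s1] pt] := inv n.
  apply: sumr_le0 => j _; apply: mulr_ge0_le0 => //.
  by apply: ln_le0; rewrite -s1; apply: (@le_sum1 R D (alpha n.+1) j).
have Phi1 : Phi (alpha 1%N) = ln (D%:R^-1).
  rewrite /Phi h1 -mulr_suml c1 mul1r //.
have Sle n : \sum_(i < n) ell i <= - ln (D%:R^-1 : R).
  have : \sum_(i < n) ell i <= Phi (alpha n.+1) - Phi (alpha 1%N).
    elim: n => [|n IH]; first by rewrite big_ord0 subrr.
    rewrite big_ord_recr /=; have := ellP n; lra.
  have := PhiP n; rewrite Phi1; lra.
have hcv : cvgn (series ell).
  apply: nondecreasing_is_cvgn.
    rewrite seriesEnat; apply: (nondecreasing_series (P := predT)) => n _ _.
    exact: ell0.
  exists (- ln (D%:R^-1 : R)) => _ [n _ <-].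
  by rewrite seriesEord; exact: Sle.
have ell_0 := cvg_series_cvg_0 hcv.
have hL : calE mu pi q (alpha t) @[t --> \oo] --> calE mu pi q amax.
  rewrite -cvg_shiftS.
  have -> : [sequence calE mu pi q (alpha n.+1)]_n =
      (fun n => calE mu pi q amax - ell n).
    by apply/funext => n /=; rewrite /ell opprB addrCA subrr addr0.
  have := cvgB (cvg_cst (calE mu pi q amax)) ell_0; rewrite subr0.
  by move=> h; apply: h; exact: eventually_filter.
apply: (final_pure (L := calE mu pi q)) => //.
- by move=> t; case: (inv t).
- move=> be bb sbe sbb cb; rewrite !calEE.
  exact: cont_calE mpi pi0 pi1 mq q0 A1 A2 be bb sbe sbb cb.
Qed.
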